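(* With $Y^+$ as in the context, $$m(Y^+)=(-1)^{\frac{p-1}{2}}\cdot\frac{p-1}{2},\qquad \#\mathrm{BF}(Y^+)_{\rm tors}=p,\qquad g_{Y^+}^*(1)=(-1)^{\frac{p-1}{2}}\cdot\frac{p-1}{2}\cdot p.$$
   Context: Let $p$ be an odd prime, $\Delta=\mathrm{Gal}(\mathbb{Q}(\zeta_p)/\mathbb{Q})$, $\sigma_i:\zeta_p\mapsto\zeta_p^i$, $j=\sigma_{-1}$. Digraphs have incidence $e\mapsto(o(e),t(e))$; the derived digraph $X(G,\alpha)$ of $\alpha:E_X\to G$ has vertices $V_X\times G$, edges $E_X\times G$, $o(e,\sigma)=(o(e),\sigma)$, $t(e,\sigma)=(t(e),\sigma\alpha(e))$, with $G$ acting by left multiplication on the second coordinate. $X$ is the bouquet with $\frac{p-1}{2}p+1$ loops $e_0$, $e_{i,k}$ ($1\le k\le i\le p-1$), $\alpha(e_0)=\sigma_1$, $\alpha(e_{i,k})=\sigma_i^{-1}$, $Y=X(\Delta,\alpha)$, and $Y^+=Y_{\langle j\rangle}$ the quotient digraph. For a finite digraph $W$: $\mathcal{A}_W(w)=\sum_{o(\varepsilon)=w}t(\varepsilon)$, $\mathrm{BF}(W)=\mathrm{coker}(\mathcal{I}-\mathcal{A}_W)$, $g_W(u)=\det(\mathcal{I}-\mathcal{A}_Wu)$, $r_W=\mathrm{ord}_{u=1}g_W$, $g_W^*(1)$ the coefficient of $(u-1)^{r_W}$ in the Taylor expansion at $1$, and (when $r_W=\mathrm{rank}_{\mathbb{Z}}\mathrm{BF}(W)$)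 $m(W)=g_W^*(1)/\#\mathrm{BF}(W)_{\rm tors}$, a nonzero integer. *)

(* Defs.v *)
From HB Require Import structures.
From mathcomp Require Import all_boot all_order all_algebra all_fingroup.
Set Implicit Arguments.
Unset Strict Implicit.
Unset Printing Implicit Defensive.
Import Order.TTheory GRing.Theory Num.Theory.
Local Open Scope ring_scope.

Record digraph := Digraph {
  dV : finType;
  dE : finType;
  dorg : dE -> dV;
  dterm : dE -> dV }.

(* Matrix of the adjacency operator A_W(w) = sum_{o(eps)=w} t(eps) on Z[V_W],
   vertices indexed through enum_val; column w is A_W(w). *)
Definition adjmx (W : digraph) : 'M[int]_#|dV W| :=
  \matrix_(i, j) (#|[set e : dE W |
                      (dorg e == enum_val j) && (dterm e == enum_val i)]|)%:Z.

(* I - A_W, whose cokernel is BF(W). *)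
Definition BFmx (W : digraph) : 'M[int]_#|dV W| := 1%:M - adjmx W.

Definition gpoly (W : digraph) : {poly int} :=
  \det (1%:M - 'X *: map_mx polyC (adjmx W)).

(* Taylor expansion of g_W at u = 1: coefficients of g_W(1 + X). *)
Definition gshift (W : digraph) : {poly int} := gpoly W \Po ('X + 1).

(* r_W = ord_{u=1} g_W : index of the first nonzero Taylor coefficient at 1. *)
Definition rW (W : digraph) : nat := find (fun c : int => c != 0) (gshift W).

(* g_W^*(1) : coefficient of (u-1)^{r_W}. *)
Definition gstar (W : digraph) : int := (gshift W)`_(rW W).

Definition in_img n (M : 'M[int]_n) (v : 'cV[int]_n) : Prop :=
  exists w : 'cV[int]_n, v = M *m w.

(* v represents a torsion class of coker M *)
Definition is_tors n (M : 'M[int]_n) (v : 'cV[int]_n) : Prop :=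
  exists2 k : int, k != 0 & in_img M (k *: v).

(* #(coker M)_tors = N : the torsion subgroup of coker M has exactly N
   elements (a bijection 'I_N -> (coker M)_tors given by representatives). *)
Definition coker_tors_card n (M : 'M[int]_n) (N : nat) : Prop :=
  exists f : 'I_N -> 'cV[int]_n,
    [/\ forall i, is_tors M (f i),
        forall i j, in_img M (f i - f j) -> i = j &
        forall v, is_tors M v -> exists i, in_img M (v - f i)].

(* rank_Z coker M = dim_Q (coker M (x) Q) = n - rank_Q M *)
Definition coker_rank n (M : 'M[int]_n) : nat :=
  (n - \rank (map_mx (intr : int -> rat) M))%N.

(* m(W) = g_W^*(1) / #BF(W)_tors, given the torsion cardinality N *)
Definition mval (W : digraph) (N : nat) : rat := (gstar W)%:~R / N%:R.

Definition derived (X : digraph) (G : finGroupType) (alpha : dE X -> G)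
  : digraph :=
  @Digraph (dV X * G)%type (dE X * G)%type
    (fun e => (dorg e.1, e.2)) (fun e => (dterm e.1, (e.2 * alpha e.1)%g)).

Definition lmul (T : finType) (G : finGroupType) (g : G) (x : T * G) : T * G :=
  (x.1, (g * x.2)%g).

Definition orbs (T : finType) (G : finGroupType) (H : {set G})
  (act : G -> T -> T) (x : T) : {set T} := [set act h x | h in H].

Definition orbit_type (T : finType) (G : finGroupType) (H : {set G})
  (act : G -> T -> T) :=
  {A : {set T} | A \in codom (orbs H act)}.

Definition to_orb (T : finType) (G : finGroupType) (H : {set G})
  (act : G -> T -> T) (x : T) : orbit_type H act :=
  exist _ (orbs H act x) (codom_f (orbs H act) x).

(* Quotient digraph W_H : vertices and edges are H-orbits, o and t induced
   (computed on a representative edge). *)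
Definition quot (W : digraph) (G : finGroupType) (H : {set G})
  (aV : G -> dV W -> dV W) (aE : G -> dE W -> dE W) : digraph :=
  @Digraph (orbit_type H aV) (orbit_type H aE)
    (fun A => to_orb H aV (dorg (iinv (valP A))))
    (fun A => to_orb H aV (dterm (iinv (valP A)))).

(* Delta = Gal(Q(zeta_p)/Q) identified with (Z/pZ)^x via sigma_i <-> i. *)
Definition Delta (p : nat) := {unit 'F_p}.

Definition sigma (p i : nat) : Delta p := insubd (1%g : {unit 'F_p}) (i%:R : 'F_p).

Definition jj (p : nat) : Delta p := sigma p (p - 1).

(* Edges of X: None = e_0, Some (i,k) = e_{i,k}, 1 <= k <= i <= p-1. *)
Definition Xedge (p : nat) :=
  option {ik : 'I_p * 'I_p | (0 < ik.2)%N && (ik.2 <= ik.1)%N}.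

Definition Xgraph (p : nat) : digraph :=
  @Digraph unit (Xedge p) (fun _ => tt) (fun _ => tt).

Definition alphaX (p : nat) (e : dE (Xgraph p)) : Delta p :=
  match e with
  | None => sigma p 1
  | Some ik => ((sigma p (val ik).1)^-1)%g
  end.

Definition Ygraph (p : nat) : digraph := derived (@alphaX p).

Definition Yplus (p : nat) : digraph :=
  @quot (Ygraph p) (Delta p) <[jj p]>%g (@lmul _ _) (@lmul _ _).

(* Main.v *)
Require Import Defs.
From HB Require Import structures.
From mathcomp Require Import all_boot all_order all_algebra all_fingroup.
From mathcomp Require Import all_solvable all_field.
From mathcomp Require Import ring lra zify.
Import GRing.Theory Num.Theory.
Local Open Scope ring_scope.

Set Implicit Arguments. Unset Strict Implicit. Unset Printing Implicit Defensive.
Import Order.TTheory.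


Lemma sum_delta (R : comNzRingType) n (i : 'I_n) (F : 'I_n -> R) :
  \sum_k ((i == k)%:R * F k) = F i.
Proof.
rewrite (bigD1 i) //= eqxx mul1r big1 ?addr0 // => k /negPf.
by rewrite eq_sym => ->; rewrite mul0r.
Qed.

Lemma ltn_ord_neq m (i j : 'I_m.+1) : (i < j)%N -> (i == j) = false /\ (j == ord0) = false.
Proof. by move=> lij; rewrite -!val_eqE /= ltn_eqF //; case: (nat_of_ord j) lij. Qed.

Lemma det_aIbJ (R : comNzRingType) m (a b : R) :
  \det (\matrix_(i, j) (a * (i == j :> 'I_m.+1)%:R + b)) = a ^+ m * (a + m.+1%:R * b).
Proof.
set M := \matrix_(i, j) _.
pose L : 'M[R]_m.+1 := \matrix_(i,j) ((i == j)%:R - ((i != ord0) && (j == ord0))%:R).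
pose U : 'M[R]_m.+1 := \matrix_(i,j) ((i == j)%:R + ((i != ord0) && (j == ord0))%:R).
pose T : 'M[R]_m.+1 := \matrix_(i,j) (a*(i==j)%:R + (i == ord0)%:R * (b * ((j==ord0)%:R * m%:R + 1))).
have dL : \det L = 1.
  rewrite det_trig; last by apply/is_trig_mxP => i j lij; rewrite !mxE;
     by case: (ltn_ord_neq lij) => [E1 E2]; rewrite E1 E2; rewrite andbF subrr.
  by apply: big1 => i _; rewrite !mxE eqxx andNb subr0.
have dU : \det U = 1.
  rewrite det_trig; last by apply/is_trig_mxP => i j lij; rewrite !mxE;
     by case: (ltn_ord_neq lij) => [E1 E2]; rewrite E1 E2; rewrite andbF addr0.
  by apply: big1 => i _; rewrite !mxE eqxx andNb addr0.
have rowsum : forall i, \sum_k M i k = a + m.+1%:R * b.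
  move=> i; rewrite (eq_bigr (fun k => a * (i == k)%:R + b)); last by move=> k _; rewrite mxE.
  rewrite big_split /= -mulr_sumr sumr_const card_ord.
  rewrite (eq_bigr (fun k => (i == k)%:R * 1)); last by move=> k _; rewrite mulr1.
  by rewrite sum_delta mulr1 mulr_natl.
have LM : forall i j, (L *m M) i j = M i j - (i != ord0)%:R * M ord0 j.
  move=> i j; rewrite mxE (eq_bigr (fun k => (i == k)%:R * M k j - (i != ord0)%:R * ((ord0 == k)%:R * M k j))).
    by rewrite sumrB sum_delta -mulr_sumr sum_delta.
  move=> k _; rewrite mxE mulrBl mulrA -natrM; congr (_ - _ * _).
  by rewrite (eq_sym ord0); case: (i != ord0); case: (k == ord0).
have LMU : L *m M *m U = T.
  apply/matrixP => i j.
  rewrite mxE (eq_bigr (fun k => (k == j)%:R * (L *m M) i k + (j == ord0)%:R * ((L *m M) i k - (ord0 == k)%:R * (L *m M) i k))).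
    rewrite big_split /= (eq_bigr (fun k => (j == k)%:R * (L *m M) i k)); last by move=> k _; rewrite eq_sym.
    rewrite sum_delta -mulr_sumr sumrB sum_delta.
    rewrite (eq_bigr (fun k => M i k - (i != ord0)%:R * M ord0 k)); last by move=> k _; rewrite LM.
    rewrite sumrB -mulr_sumr !rowsum !LM !mxE.
    case: (i =P ord0) => [->|/eqP ni]; case: (j =P ord0) => [->|/eqP nj]; rewrite ?eqxx /=;
      rewrite ?(eq_sym ord0 j) ?(eq_sym ord0 i) /=;
      try rewrite (negPf ni); try rewrite (negPf nj); rewrite /=; ring.
  move=> k _; rewrite !mxE; rewrite (eq_sym ord0).
  case: (k =P ord0) => [->|/eqP nk]; case: (j =P ord0) => [->|/eqP nj]; rewrite ?eqxx /=;
  rewrite ?(negPf nk) ?(negPf nj) /=; ring.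
have : \det (L *m M *m U) = \det M by rewrite !det_mulmx dL dU mul1r mulr1.
rewrite LMU => <-.
rewrite -det_tr det_trig; last first.
  apply/is_trig_mxP => i j lij; rewrite !mxE.
  case: (ltn_ord_neq lij) => E1 E2; rewrite E2 (eq_sym j) E1 /=; ring.
rewrite big_ord_recl !mxE !eqxx /=.
rewrite (eq_bigr (fun _ => a)); last by move=> i _; rewrite !mxE eqxx /=; ring.
rewrite prodr_const card_ord mulrC. rewrite -[m.+1]addn1 natrD. ring.
Qed.


Lemma natFp_eq0 p (pr : prime p) i : ((i%:R : 'F_p) == 0) = (p %| i)%N.
Proof. by rewrite -val_eqE /= val_Fp_nat. Qed.

Lemma val_sigma p (pr : prime p) i : (0 < i < p)%N -> val (sigma p i) = i%:R.
Proof.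
move=> /andP[i0 ip]; rewrite /sigma val_insubd unitfE natFp_eq0 //.
by rewrite /dvdn modn_small // -lt0n i0.
Qed.

Lemma val_jj p (pr : prime p) : val (jj p) = -1.
Proof.
have p1 := prime_gt1 pr.
rewrite /jj (val_sigma pr); last by apply/andP; split; lia.
rewrite natrB; last by lia.
have -> : (p%:R : 'F_p) = 0 by apply/eqP; rewrite natFp_eq0.
by rewrite sub0r.
Qed.

Lemma jj_neq1 p (pr : prime p) (po : odd p) : jj p != 1%g.
Proof.
apply/eqP => /(congr1 val); rewrite val_jj // FinRing.val_unit1 => /eqP.
rewrite eq_sym -addr_eq0 -(natrD _ 1 1) natFp_eq0 // => /dvdn_leq.
have p1 := prime_gt1 pr; case: p pr po p1 => [|[|[|p]]] //=.
by move=> _ _ _ /(_ isT).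
Qed.

Lemma jj_sq p (pr : prime p) : (jj p * jj p = 1)%g.
Proof. by apply: val_inj; rewrite FinRing.val_unitM FinRing.val_unit1 val_jj // mulrNN mulr1. Qed.

Lemma cycle_jj p (pr : prime p) (po : odd p) : <[jj p]>%g = [set 1%g; jj p].
Proof.
apply: cycle2g; apply/eqP; rewrite eqn_leq.
have : (#[jj p]%g %| 2)%N by rewrite order_dvdn expgS expg1 jj_sq.
move=> /dvdn_leq -> //=; rewrite ltn_neqAle order_gt0 andbT eq_sym order_eq1 jj_neq1 //.
Qed.


Lemma lmul1 (T : finType) (G : finGroupType) (x : T * G) : lmul 1%g x = x.
Proof. by case: x => a b; rewrite /lmul mul1g. Qed.

Lemma lmulK p (pr : prime p) (T : finType) (x : T * Delta p) : lmul (jj p) (lmul (jj p) x) = x.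
Proof. by case: x => a b; rewrite /lmul /= mulgA jj_sq // mul1g. Qed.

Lemma lmul_neq p (pr : prime p) (po : odd p) (T : finType) (x : T * Delta p) : x != lmul (jj p) x.
Proof.
case: x => a b; apply/eqP => -[] /eqP; rewrite -{1}(mul1g b) (inj_eq (mulIg b)) eq_sym.
by rewrite (negPf (jj_neq1 pr po)).
Qed.

Lemma orbsE p (pr : prime p) (po : odd p) (T : finType) (z : T * Delta p) :
  orbs <[jj p]>%g (@lmul T (Delta p)) z = [set z; lmul (jj p) z].
Proof. by rewrite /orbs cycle_jj // imsetU1 imset_set1 lmul1. Qed.

Lemma to_orb_eq p (pr : prime p) (po : odd p) (T : finType) (x y : T * Delta p) :
  (to_orb <[jj p]>%g (@lmul T (Delta p)) y == to_orb _ _ x) = (y == x) || (y == lmul (jj p) x).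
Proof.
rewrite -val_eqE /= !orbsE //; apply/eqP/idP.
  by move=> e; rewrite -in_set2 -e in_set2 eqxx.
case/orP => /eqP -> //; by rewrite lmulK // setUC.
Qed.

Lemma to_orb_lmul p (pr : prime p) (po : odd p) (T : finType) (x : T * Delta p) :
  to_orb <[jj p]>%g (@lmul T (Delta p)) (lmul (jj p) x) = to_orb _ _ x.
Proof. by apply/eqP; rewrite to_orb_eq // eqxx orbT. Qed.

Lemma to_orb_surj p (T : finType) (A : orbit_type <[jj p]>%g (@lmul T (Delta p))) :
  exists x, A = to_orb _ _ x.
Proof.
case: A => B hB; case/codomP: (hB) => x e; exists x; apply: val_inj => /=; exact: e.
Qed.

Lemma card_orb_pred p (pr : prime p) (po : odd p) (T : finType)
  (P : pred (orbit_type <[jj p]>%g (@lmul T (Delta p)))) :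
  #|[set x | P (to_orb _ _ x)]| = (2 * #|[set A | P A]|)%N.
Proof.
rewrite -!sum1_card (partition_big (to_orb <[jj p]>%g (@lmul T (Delta p))) (fun A => A \in [set A | P A])) /=; last by move=> x; rewrite !inE.
rewrite big_distrr /=; apply: eq_bigr => A; rewrite inE => PA.
case: (to_orb_surj A) => x0 eA; subst A.
rewrite (eq_bigl (pred2 x0 (lmul (jj p) x0))).
  by rewrite sum1_card card2 lmul_neq.
move=> x /=; rewrite inE to_orb_eq //.
case H: ((x == x0) || _); rewrite ?andbF ?andbT //.
by have /eqP -> : to_orb <[jj p]>%g (@lmul T (Delta p)) x == to_orb _ _ x0 by rewrite to_orb_eq.
Qed.


Lemma sum_option (S : finType) (F : option S -> nat) :
  (\sum_(e : option S) F e = F None + \sum_(s : S) F (Some s))%N.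
Proof.
by rewrite ![index_enum _]unlock [@Finite.enum in LHS]unlock /= big_cons big_map.
Qed.

Lemma card_V p (pr : prime p) (po : odd p) : #|dV (Yplus p)| = p.-1./2.
Proof.
have h : #|[set: unit * Delta p]| = (2 * #|[set: dV (Yplus p)]|)%N.
  by rewrite -(card_orb_pred pr po predT); apply: eq_card => x; rewrite !inE.
move: h; rewrite !cardsT card_prod card_unit mul1n -cardsT card_finField_unit card_Fp //.
by move=> ->; rewrite mul2n doubleK.
Qed.

Lemma iinv_orb p (pr : prime p) (po : odd p) (T : finType) (x : T * Delta p)
  (h : orbs <[jj p]>%g (@lmul T (Delta p)) x \in codom (orbs <[jj p]>%g (@lmul T (Delta p)))) :
  (iinv h == x) || (iinv h == lmul (jj p) x).
Proof.
rewrite -to_orb_eq //; apply/eqP/val_inj => /=; rewrite f_iinv //.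
Qed.

Lemma dorg_to_orb p (pr : prime p) (po : odd p) (x : Xedge p * Delta p) :
  @dorg (Yplus p) (to_orb <[jj p]>%g (@lmul (Xedge p) (Delta p)) x) =
  to_orb <[jj p]>%g (@lmul unit (Delta p)) (tt, x.2).
Proof.
rewrite /=; case/orP: (iinv_orb pr po (valP (to_orb <[jj p]>%g (@lmul (Xedge p) (Delta p)) x))) => /eqP -> //.
by rewrite -(to_orb_lmul pr po (tt, x.2)).
Qed.

Lemma dterm_to_orb p (pr : prime p) (po : odd p) (x : Xedge p * Delta p) :
  @dterm (Yplus p) (to_orb <[jj p]>%g (@lmul (Xedge p) (Delta p)) x) =
  to_orb <[jj p]>%g (@lmul unit (Delta p)) (tt, (x.2 * alphaX x.1)%g).
Proof.
rewrite /=; case/orP: (iinv_orb pr po (valP (to_orb <[jj p]>%g (@lmul (Xedge p) (Delta p)) x))) => /eqP -> //.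
by rewrite /= -mulgA; exact: (to_orb_lmul pr po (tt, _)).
Qed.

Definition relj p (s t : Delta p) := (s == t) || (s == jj p * t)%g.

Lemma to_orb_tt p (pr : prime p) (po : odd p) (s t : Delta p) :
  (to_orb <[jj p]>%g (@lmul unit (Delta p)) (tt, s) == to_orb _ _ (tt, t)) = relj s t.
Proof. by rewrite to_orb_eq // /lmul /= !xpair_eqE. Qed.

Lemma relj_jj p (pr : prime p) (s t : Delta p) : relj (jj p * s)%g t = relj s t.
Proof.
rewrite /relj orbC; congr (_ || _).
  by rewrite (inj_eq (mulgI (jj p))).
by apply/eqP/eqP => [<-|->]; rewrite mulgA jj_sq // mul1g.
Qed.

Lemma card_relj p (pr : prime p) (po : odd p) (b : Delta p) : #|[set s | relj s b]| = 2.
Proof.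
have -> : #|[set s | relj s b]| = #|pred2 b (jj p * b)%g| by apply: eq_card => s; rewrite inE.
rewrite card2.
rewrite -{1}(mul1g b) (inj_eq (mulIg b)) eq_sym.
by rewrite (negPf (jj_neq1 pr po)).
Qed.

Lemma adj_entry p (pr : prime p) (po : odd p) (b c : Delta p) :
  #|[set A : dE (Yplus p) | (@dorg (Yplus p) A == to_orb <[jj p]>%g (@lmul unit (Delta p)) (tt, b))
        && (@dterm (Yplus p) A == to_orb <[jj p]>%g (@lmul unit (Delta p)) (tt, c))]|
  = #|[set e : Xedge p | relj (b * alphaX e)%g c]|.
Proof.
apply/eqP; rewrite -(eqn_pmul2l (_ : 0 < 2)%N) //; apply/eqP.
rewrite -(card_orb_pred pr po (fun A : dE (Yplus p) => (@dorg (Yplus p) A == to_orb <[jj p]>%g (@lmul unit (Delta p)) (tt, b))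
        && (@dterm (Yplus p) A == to_orb <[jj p]>%g (@lmul unit (Delta p)) (tt, c)))).
transitivity (#|setX [set e | relj (b * alphaX e)%g c] [set s | relj s b]|); last by rewrite cardsX card_relj // mulnC.
apply: eq_card => -[e s]; rewrite !inE.
rewrite (dorg_to_orb pr po (e, s)) (dterm_to_orb pr po (e, s)) /= !to_orb_tt //.
case H: (relj s b); rewrite ?andbT ?andbF //.
by case/orP: H => /eqP -> //; rewrite -mulgA relj_jj.
Qed.


Lemma natr_Fp p (x : 'F_p) : ((x : nat)%:R : 'F_p) = x.
Proof. exact: natr_Zp. Qed.

Lemma sum_le_ord n i : (\sum_(k < n) ((0 < k) && (k <= i)) = minn i n.-1)%N.
Proof.
elim: n => [|n IH]; first by rewrite big_ord0 minn0.
rewrite big_ord_recr /= IH; case: n {IH} => [|n] /=; first by rewrite minn0.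
case: (leqP n.+1 i) => h /=; lia.
Qed.

Lemma sum_eq_ord n a (ha : (a < n)%N) : (\sum_(i < n) (i == a :> nat) * i = a)%N.
Proof.
rewrite (bigD1 (Ordinal ha)) //= eqxx mul1n big1 ?addn0 // => i /negPf.
by rewrite -val_eqE /= => ->.
Qed.

Lemma card_option_set (S : finType) (Q : pred (option S)) :
  #|[set e | Q e]| = (Q None + #|[set s | Q (Some s)]|)%N.
Proof.
rewrite -!sum1_card big_mkcond sum_option /= !inE [in RHS]big_mkcond; congr (_ + _)%N.
by apply: eq_bigr => s _; rewrite !inE.
Qed.

Lemma card_sig_set (T : finType) (P R : pred T) :
  #|[set t : {x | P x} | R (val t)]| = #|[set x | P x && R x]|.
Proof.
rewrite -(card_imset _ val_inj); apply: eq_card => x; rewrite inE.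
apply/imsetP/andP => [[t]|[Px Rx]].
  by rewrite inE => Rt ->; split => //; exact: valP.
by exists (exist _ x Px); rewrite ?inE.
Qed.

Lemma card_pairs p (R : pred 'I_p) :
  #|[set x : 'I_p * 'I_p | ((0 < x.2) && (x.2 <= x.1))%N && R x.1]| = (\sum_(i < p) R i * i)%N.
Proof.
set A := [set x | _].
transitivity (\sum_(i < p) \sum_(k < p) (if (i, k) \in A then 1 else 0))%N.
  by rewrite pair_bigA -sum1_card big_mkcond; apply: eq_bigr => -[i k].
apply: eq_bigr => i _.
transitivity (R i * \sum_(k < p) ((0 < k) && (k <= i)))%N.
  rewrite big_distrr; apply: eq_bigr => k _; rewrite inE /=.
  by case: (R i); case: ((0 < k)%N && (k <= i)%N); rewrite ?andbT ?andbF.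
by rewrite sum_le_ord; congr (_ * _)%N; have := ltn_ord i; lia.
Qed.

Lemma natFp_inj p (pr : prime p) i j : (i < p)%N -> (j < p)%N -> ((i%:R : 'F_p) == j%:R) = (i == j).
Proof. by move=> ip jp; rewrite -val_eqE /= !val_Fp_nat // !modn_small. Qed.

Lemma div_eq_swap (F : fieldType) (u v w : F) : u != 0 -> v != 0 -> w != 0 ->
  (u / v == w) = (v == u / w).
Proof.
move=> u0 v0 w0; apply/eqP/eqP => h.
  by rewrite -h; field; rewrite ?u0 ?v0.
by rewrite h; field; rewrite ?u0 ?w0.
Qed.

Lemma unit_neq0 p (u : Delta p) : val u != 0.
Proof. by rewrite -unitfE; exact: valP. Qed.

Lemma sum_two p a : odd p -> (0 < a < p)%N ->
  (\sum_(i < p) ((i == a :> nat) || (i == p - a :> nat)) * i = p)%N.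
Proof.
move=> po /andP[a0 ap].
have ne : (a != p - a)%N.
  apply/eqP => e; move: po; rewrite (_ : p = a.*2)%N ?odd_double //; rewrite -addnn; lia.
rewrite (eq_bigr (fun i : 'I_p => (i == a :> nat) * i + (i == p - a :> nat) * i)%N); last first.
  move=> i _; case: (nat_of_ord i =P a) => [->|_]; rewrite ?(negPf ne) //=; lia.
by rewrite big_split /= !sum_eq_ord; lia.
Qed.

Lemma uval_eq p (u v : Delta p) : (u == v) = (val u == val v).
Proof. by rewrite val_eqE. Qed.

Lemma card_edges p (pr : prime p) (po : odd p) (b c : Delta p) :
  #|[set e : Xedge p | relj (b * alphaX e)%g c]| = (relj b c + p)%N.
Proof.
have p1 := prime_gt1 pr.
have s1 : sigma p 1 = 1%g by apply: val_inj; rewrite val_sigma // ?FinRing.val_unit1 //; lia.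
rewrite card_option_set /= s1 mulg1; congr (_ + _)%N.
transitivity (#|[set x : 'I_p * 'I_p | ((0 < x.2) && (x.2 <= x.1))%N && relj (b * (sigma p x.1)^-1)%g c]|).
  exact: (card_sig_set (fun x : 'I_p * 'I_p => ((0 < x.2) && (x.2 <= x.1))%N) (fun x => relj (b * (sigma p x.1)^-1)%g c)).
rewrite (card_pairs (fun i : 'I_p => relj (b * (sigma p i)^-1)%g c)).
set d := val b / val c.
have d0 : d != 0 by rewrite mulf_neq0 ?invr_eq0 ?unit_neq0.
pose a := (d : nat).
have ap : (a < p)%N by have h : (a < (Zp_trunc (pdiv p)).+2)%N := ltn_ord d; rewrite Fp_cast in h.
have da : d = a%:R by rewrite natr_Fp.
have a0 : (0 < a)%N by rewrite lt0n; apply: contra d0 => /eqP a0; rewrite da a0.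
rewrite -[RHS](sum_two (a := a) po); last by rewrite a0 ap.
apply: eq_bigr => i _; case: (posnP i) => [->|i0]; rewrite ?muln0 //; congr (_ * _)%N.
have ip := ltn_ord i.
rewrite /relj !uval_eq !FinRing.val_unitM FinRing.val_unitV val_jj // mulN1r.
rewrite val_sigma ?i0 // div_eq_swap ?unit_neq0 //; last by rewrite natFp_eq0 // /dvdn modn_small //; lia.
rewrite [X in _ || X]div_eq_swap ?unit_neq0 ?oppr_eq0 //; last first.
  by rewrite unit_neq0.
  by rewrite natFp_eq0 // /dvdn modn_small //; lia.
rewrite invrN mulrN -/d da natFp_inj //; congr (_ || _).
rewrite -(natFp_inj pr (i := i)) //; last by lia.
by rewrite natrB ?(ltnW ap) // (_ : (p%:R : 'F_p) = 0) ?sub0r //; apply/eqP; rewrite natFp_eq0.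
Qed.


Lemma adjE p (pr : prime p) (po : odd p) :
  adjmx (Yplus p) = \matrix_(i, j) ((i == j)%:R + p%:R).
Proof.
apply/matrixP => i j; rewrite !mxE.
case: (to_orb_surj (enum_val j : dV (Yplus p))) => -[[] b] eb.
case: (to_orb_surj (enum_val i : dV (Yplus p))) => -[[] c] ec.
rewrite eb ec (adj_entry pr po b c) card_edges // -(to_orb_tt pr po) -eb -ec.
by rewrite (inj_eq enum_val_inj) eq_sym PoszD !natz.
Qed.


Lemma img_const m (p : nat) (v : 'cV[int]_m.+1) :
  in_img (const_mx (- p%:Z)) v <-> exists c : int, v = const_mx (p%:Z * c).
Proof.
split.
  case=> w ->; exists (- \sum_k w k 0); apply/matrixP => i j; rewrite !mxE mulrN -mulNr mulr_sumr.
  by rewrite (ord1 j); apply: eq_bigr => k _; rewrite mxE.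
case=> c ->; exists (\col_k (if k == ord0 then - c else 0)).
apply/matrixP => i j; rewrite !mxE (bigD1 ord0) //= big1 ?addr0.
  by rewrite !mxE eqxx mulrNN.
by move=> k /negPf nk; rewrite !mxE nk mulr0.
Qed.

Lemma tors_const m (p : nat) (pr : prime p) :
  coker_tors_card (const_mx (- p%:Z) : 'M[int]_m.+1) p.
Proof.
have p0 : (0 < p)%N by exact: prime_gt0.
exists (fun i : 'I_p => const_mx (i%:Z)); split.
- move=> i; exists (p%:Z); first by apply/eqP; lia.
  by apply/img_const; exists (i%:Z); apply/matrixP => a b; rewrite !mxE mulrC.
- move=> i j /img_const [c] /matrixP /(_ ord0 ord0); rewrite !mxE => e.
  apply: val_inj => /=; have := ltn_ord i; have := ltn_ord j.
  case: (ltrgt0P c) => [c0|c0|c0]; move: e; rewrite ?c0; nia.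
- move=> v [k k0 /img_const [c /matrixP e]].
  have ev : forall a, v a 0 = v ord0 0.
    move=> a; apply: (mulfI k0); have := e a 0; have := e ord0 0; rewrite !mxE => -> ->.
    by [].
  set c' := v ord0 0.
  have pz : (p%:Z != 0) by apply/eqP; lia.
  have r0 : 0 <= (c' %% p)%Z by rewrite modz_ge0.
  have rp : (c' %% p < p)%Z by rewrite ltz_pmod // ltz_nat.
  have ri : (absz (c' %% p)%Z < p)%N by rewrite -ltz_nat gez0_abs.
  exists (Ordinal ri); apply/img_const; exists (c' %/ p)%Z.
  apply/matrixP => a b; rewrite !mxE /= gez0_abs // (ord1 b) ev -/c'.
  by rewrite {1}(divz_eq c' p) mulrC addrK.
Qed.


Lemma find_first (s : seq int) m : (forall k, (k < m)%N -> s`_k = 0) -> s`_m != 0 ->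
  find (fun c => c != 0) s = m.
Proof.
elim: s m => [|x s IH] [|m] /= hk hm; rewrite ?nth_nil ?eqxx // in hm *.
  by rewrite hm.
have -> : x = 0 by exact: (hk 0%N).
rewrite eqxx /= (IH m) // => k km; exact: (hk k.+1).
Qed.

Lemma gpoly_calc m (p : nat) (A : 'M[int]_m.+1) :
  A = \matrix_(i, j) ((i == j)%:R + p%:R) ->
  \det (1%:M - 'X *: map_mx polyC A) \Po ('X + 1) =
  'X^m * (((-1) ^+ m * - (m.+1 * p)%:R)%:P + ((-1) ^+ m * - (1 + (m.+1 * p)%:R))%:P * 'X).
Proof.
move=> ->.
have -> : 1%:M - 'X *: map_mx polyC (\matrix_(i, j) ((i == j)%:R + p%:R) : 'M[int]_m.+1) =
   \matrix_(i, j) ((1 - 'X) * (i == j)%:R + - (p%:R * 'X)).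
  apply/matrixP => i j; rewrite !mxE rmorphD /= rmorph_nat.
  by case: (i == j); rewrite /= ?mulr1n ?mulr0n; ring.
rewrite det_aIbJ rmorphM rmorphXn /= !rmorphD !rmorphN !rmorphM /= !rmorph_nat !rmorph1 comp_polyX.
have -> : 1 - ('X + 1) = - ('X : {poly int}) by ring.
rewrite exprNn !polyCM !polyCN polyCD polyC_exp polyCN polyC1 rmorphN rmorphM /= rmorph_nat comp_polyX expr1n polyC1 [(- _) ^+ m]exprNn !polyCD !polyCM !polyC_natr polyC1.
rewrite -[m.+1]addn1 natrD; ring.
Qed.


Lemma rank_const (F : fieldType) n (c : F) : c != 0 -> \rank (const_mx c : 'M[F]_n.+1) = 1%N.
Proof.
move=> c0; apply/eqP; rewrite eqn_leq; apply/andP; split.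
  have -> : const_mx c = (const_mx 1 : 'cV[F]_n.+1) *m (const_mx c : 'rV[F]_n.+1).
    by apply/matrixP => i j; rewrite !mxE big_ord1 !mxE mul1r.
  exact: leq_trans (mxrankM_maxl _ _) (rank_leq_col _).
rewrite lt0n mxrank_eq0; apply/eqP => /matrixP /(_ ord0 ord0); rewrite !mxE; apply/eqP; exact c0.
Qed.

Lemma main_mx m (p : nat) (pr : prime p) (A : 'M[int]_m.+1) :
  A = \matrix_(i, j) ((i == j)%:R + p%:R) ->
  [/\ find (fun c => c != 0) (\det (1%:M - 'X *: map_mx polyC A) \Po ('X + 1)) = m,
      (\det (1%:M - 'X *: map_mx polyC A) \Po ('X + 1))`_m = (-1) ^+ m.+1 * m.+1%:Z * p%:Z,
      coker_rank (1%:M - A) = m & coker_tors_card (1%:M - A) p].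
Proof.
move=> eA.
have p0 : (0 < p)%N by exact: prime_gt0.
have BF : 1%:M - A = const_mx (- p%:Z).
  apply/matrixP => i j; rewrite eA !mxE; case: (i == j); rewrite /= ?mulr1n ?mulr0n; ring.
have cm : (\det (1%:M - 'X *: map_mx polyC A) \Po ('X + 1))`_m = (-1) ^+ m * - (m.+1 * p)%:R.
  by rewrite (gpoly_calc eA) coefXnM ltnn subnn coefD coefC coefCM coefX /= mulr0 addr0.
split.
- apply: find_first.
    by move=> k km; rewrite (gpoly_calc eA) coefXnM km.
  rewrite cm mulf_neq0 ?signr_eq0 // oppr_eq0 pnatr_eq0 muln_eq0 negb_or /=; lia.
- by rewrite cm exprS natrM; ring.
- rewrite /coker_rank BF map_const_mx rank_const ?subn1 //.
  by rewrite intr_eq0 oppr_eq0; apply/eqP; lia.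
- rewrite BF; exact: tors_const.
Qed.


Unset Implicit Arguments.

Theorem corollary5p5 (p : nat) (p_prime : prime p) (p_odd : odd p) :
  [/\ rW (Yplus p) = coker_rank (BFmx (Yplus p)),
      mval (Yplus p) p = (-1) ^+ (p.-1./2) * (p.-1./2)%:R,
      coker_tors_card (BFmx (Yplus p)) p &
      gstar (Yplus p) = (-1) ^+ (p.-1./2) * (p.-1./2)%:Z * p%:Z].
Proof.
have p1 := prime_gt1 p_prime.
have hn := card_V p_prime p_odd.
have hpos : (0 < #|dV (Yplus p)|)%N.
  rewrite hn; move: p_odd p1; case: (p) => [|[|[|q]]] //=.
have eA := adjE p_prime p_odd.
have pQ : (p%:R : rat) != 0 by rewrite pnatr_eq0; apply/eqP; lia.
rewrite /mval /gstar /rW /gshift /gpoly /BFmx -hn.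
move: (#|dV (Yplus p)|) hpos (adjmx (Yplus p)) eA => n.
case: n => // m _ A eA.
have [h1 h2 h3 h4] := main_mx p_prime eA.
rewrite h1 h2 h3; split => //.
rewrite !intrM -!pmulrn rmorph_sign mulfK //.

Qed.
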